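(* For all level expressions $l_1, l_2, l$ and every natural number $n > 0$: $l_1 \sqcup l \simeq l_2 \sqcup \mathtt{s}^n\,l$ if and only if $l_1 \simeq l_2 \sqcup \mathtt{s}^n\,l$.
   Context: Level expressions are generated by the grammar $l ::= i \mid \mathtt{z} \mid \mathtt{s}\,l \mid l \sqcup l'$, where $i$ ranges over an infinite set $\mathcal{I}$ of level variables. The relation $\simeq$ is the smallest congruence on level expressions (closed under the constructors and under substitution of level expressions for level variables) containing the equations $i_1 \sqcup (i_2 \sqcup i_3) \approx (i_1 \sqcup i_2) \sqcup i_3$, $i_1 \sqcup i_2 \approx i_2 \sqcup i_1$, $\mathtt{s}\,(i_1 \sqcup i_2) \approx \mathtt{s}\,i_1 \sqcup \mathtt{s}\,i_2$, $i \sqcup \mathtt{s}\,i \approx \mathtt{s}\,i$, $i \sqcup \mathtt{z} \approx i$, $i \sqcup i \approx i$. $\mathtt{s}^0\,l = l$, $\mathtt{s}^{n+1}\,l = \mathtt{s}(\mathtt{s}^n\,l)$. *)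

(* Defs.v *)
From Stdlib Require Import Arith.

(* Level variables: the infinite set I is taken to be nat. *)
Inductive level : Type :=
| LVar : nat -> level
| LZ : level
| LS : level -> level
| LMax : level -> level -> level.

Fixpoint lsubst (sigma : nat -> level) (l : level) : level :=
  match l with
  | LVar i => sigma i
  | LZ => LZ
  | LS l' => LS (lsubst sigma l')
  | LMax a b => LMax (lsubst sigma a) (lsubst sigma b)
  end.

Fixpoint liter (n : nat) (l : level) : level :=
  match n with
  | 0 => l
  | S n' => LS (liter n' l)
  end.

(* The smallest congruence, closed under the constructors and under
   substitution, containing the six defining equations (stated on
   level variables, as in the paper). *)
Inductive leq_equiv : level -> level -> Prop :=
| le_assoc : forall i1 i2 i3 : nat,
    leq_equiv (LMax (LVar i1) (LMax (LVar i2) (LVar i3)))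
              (LMax (LMax (LVar i1) (LVar i2)) (LVar i3))
| le_comm : forall i1 i2 : nat,
    leq_equiv (LMax (LVar i1) (LVar i2)) (LMax (LVar i2) (LVar i1))
| le_sdist : forall i1 i2 : nat,
    leq_equiv (LS (LMax (LVar i1) (LVar i2))) (LMax (LS (LVar i1)) (LS (LVar i2)))
| le_sabs : forall i : nat,
    leq_equiv (LMax (LVar i) (LS (LVar i))) (LS (LVar i))
| le_zero : forall i : nat,
    leq_equiv (LMax (LVar i) LZ) (LVar i)
| le_idem : forall i : nat,
    leq_equiv (LMax (LVar i) (LVar i)) (LVar i)
| le_refl : forall l, leq_equiv l l
| le_sym : forall l l', leq_equiv l l' -> leq_equiv l' l
| le_trans : forall l1 l2 l3, leq_equiv l1 l2 -> leq_equiv l2 l3 -> leq_equiv l1 l3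
| le_S : forall l l', leq_equiv l l' -> leq_equiv (LS l) (LS l')
| le_Max : forall a a' b b', leq_equiv a a' -> leq_equiv b b' ->
    leq_equiv (LMax a b) (LMax a' b')
| le_subst : forall (sigma : nat -> level) l l',
    leq_equiv l l' -> leq_equiv (lsubst sigma l) (lsubst sigma l').

(* Main.v *)
Require Import Defs.
From Stdlib Require Import Setoid Morphisms Arith Lia List.
Import ListNotations.

#[local] Instance E_equiv : Equivalence leq_equiv.
Proof. split; [exact le_refl|exact le_sym|exact le_trans]. Qed.
#[local] Instance LS_prop : Proper (leq_equiv ==> leq_equiv) LS.
Proof. intros ? ? H; now apply le_S. Qed.
#[local] Instance LMax_prop : Proper (leq_equiv ==> leq_equiv ==> leq_equiv) LMax.
Proof. intros ? ? H ? ? H'; now apply le_Max. Qed.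

Definition sg3 (a b c : level) : nat -> level :=
  fun i => match i with 0 => a | 1 => b | _ => c end.

Lemma L_assoc a b c : leq_equiv (LMax a (LMax b c)) (LMax (LMax a b) c).
Proof. exact (le_subst (sg3 a b c) _ _ (le_assoc 0 1 2)). Qed.
Lemma L_comm a b : leq_equiv (LMax a b) (LMax b a).
Proof. exact (le_subst (sg3 a b b) _ _ (le_comm 0 1)). Qed.
Lemma L_sdist a b : leq_equiv (LS (LMax a b)) (LMax (LS a) (LS b)).
Proof. exact (le_subst (sg3 a b b) _ _ (le_sdist 0 1)). Qed.
Lemma L_sabs a : leq_equiv (LMax a (LS a)) (LS a).
Proof. exact (le_subst (sg3 a a a) _ _ (le_sabs 0)). Qed.
Lemma L_zero a : leq_equiv (LMax a LZ) a.
Proof. exact (le_subst (sg3 a a a) _ _ (le_zero 0)). Qed.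
Lemma L_idem a : leq_equiv (LMax a a) a.
Proof. exact (le_subst (sg3 a a a) _ _ (le_idem 0)). Qed.

Definition atm := (option nat * nat)%type.
Definition atom (p : atm) : level :=
  liter (snd p) (match fst p with Some i => LVar i | None => LZ end).
Definition J (A : list atm) : level := fold_right (fun p acc => LMax (atom p) acc) LZ A.
Definition shift (p : atm) : atm := (fst p, S (snd p)).

Fixpoint atoms (l : level) : list atm :=
  match l with
  | LVar i => [(Some i, 0)]
  | LZ => [(None, 0)]
  | LS l' => map shift (atoms l')
  | LMax a b => atoms a ++ atoms b
  end.

Lemma J_app A B : leq_equiv (J (A ++ B)) (LMax (J A) (J B)).
Proof.
  induction A as [|a A IH]; simpl.
  - rewrite L_comm, L_zero. reflexivity.
  - rewrite IH. apply L_assoc.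
Qed.

Lemma J_shift A : A <> [] -> leq_equiv (LS (J A)) (J (map shift A)).
Proof.
  induction A as [|a A IH]; intros Hne; [contradiction|].
  destruct A as [|b A].
  - simpl. rewrite !L_zero. reflexivity.
  - change (leq_equiv (LS (LMax (atom a) (J (b :: A))))
                      (LMax (LS (atom a)) (J (map shift (b :: A))))).
    rewrite L_sdist, IH by discriminate. reflexivity.
Qed.

Lemma atoms_ne l : atoms l <> [].
Proof.
  induction l; simpl; try discriminate.
  - destruct (atoms l); simpl; congruence.
  - destruct (atoms l1); simpl; congruence.
Qed.

Lemma nf l : leq_equiv l (J (atoms l)).
Proof.
  induction l; simpl.
  - symmetry. apply L_zero.
  - symmetry. apply L_idem.
  - rewrite IHl at 1. apply J_shift, atoms_ne.
  - rewrite J_app, <- IHl1, <- IHl2. reflexivity.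
Qed.

Fixpoint eval (r : nat -> nat) (l : level) : nat :=
  match l with
  | LVar i => r i
  | LZ => 0
  | LS l' => S (eval r l')
  | LMax a b => Nat.max (eval r a) (eval r b)
  end.

Lemma eval_subst r s l : eval r (lsubst s l) = eval (fun i => eval r (s i)) l.
Proof. induction l; simpl; auto. Qed.

Lemma eval_liter r n l : eval r (liter n l) = n + eval r l.
Proof. induction n; simpl; auto. Qed.

Lemma sound a b : leq_equiv a b -> forall r, eval r a = eval r b.
Proof.
  induction 1 as [| | | | | | |? ? ? IH|? ? ? ? IH1 ? IH2|? ? ? IH|? ? ? ? ? IH1 ? IH2|? ? ? ? IH];
    intros r; simpl; try lia.
  - rewrite IH; auto.
  - rewrite IH1; auto.
  - rewrite IH; auto.
  - rewrite IH1, IH2; auto.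
  - rewrite !eval_subst; auto.
Qed.

Lemma eval_atom r o k : eval r (atom (o, k)) = k + match o with Some i => r i | None => 0 end.
Proof. unfold atom; simpl. rewrite eval_liter. destruct o; reflexivity. Qed.

Lemma ex_atom r B n : 0 < n -> n <= eval r (J B) -> exists b, In b B /\ n <= eval r (atom b).
Proof.
  induction B as [|b B IH]; simpl; intros Hn H; [lia|].
  destruct (Nat.le_ge_cases (eval r (atom b)) (eval r (J B))).
  - destruct IH as [c [Hc Hc']]; auto; [lia|]. eauto.
  - exists b; split; auto; lia.
Qed.

Lemma in_le r B b : In b B -> eval r (atom b) <= eval r (J B).
Proof.
  induction B as [|c B IH]; simpl; intros H; [contradiction|].
  destruct H as [<-|H]; [lia|]. specialize (IH H); lia.
Qed.

Lemma liter_mono t d : leq_equiv (LMax t (liter d t)) (liter d t).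
Proof.
  induction d; simpl.
  - apply L_idem.
  - transitivity (LMax t (LS (LMax t (liter d t)))).
    + rewrite IHd. reflexivity.
    + rewrite L_sdist, L_assoc, L_sabs, <- L_sdist, IHd. reflexivity.
Qed.

Lemma liter_lift k u v : leq_equiv (LMax u v) v ->
  leq_equiv (LMax (liter k u) (liter k v)) (liter k v).
Proof.
  intros H; induction k; simpl; auto.
  rewrite <- L_sdist, IHk. reflexivity.
Qed.

Lemma liter_add k d t : liter (k + d) t = liter k (liter d t).
Proof. induction k; simpl; congruence. Qed.

Lemma atom_le oa k ob m : (oa = None \/ oa = ob) -> k <= m ->
  leq_equiv (LMax (atom (oa, k)) (atom (ob, m))) (atom (ob, m)).
Proof.
  intros Ho Hk. replace m with (k + (m - k)) by lia.
  unfold atom; simpl. rewrite liter_add. apply liter_lift.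
  destruct Ho as [->| ->].
  - rewrite L_comm, L_zero. reflexivity.
  - apply liter_mono.
Qed.

Lemma absorb_in a (b : atm) (B : list atm) : In b B -> leq_equiv (LMax a (atom b)) (atom b) -> leq_equiv (LMax a (J B)) (J B).
Proof.
  induction B as [|c B IH]; simpl; intros Hi H; [contradiction|].
  destruct Hi as [->|Hi].
  - rewrite L_assoc, H. reflexivity.
  - rewrite L_assoc, (L_comm a (atom c)), <- L_assoc, IH; auto. reflexivity.
Qed.

Lemma atom_below a B : (forall r, eval r (atom a) <= eval r (J B)) ->
  leq_equiv (LMax (atom a) (J B)) (J B).
Proof.
  intros H. set (r0 := fun _ : nat => 0).
  destruct a as [[x|] k].
  - set (N := S (eval r0 (J B))).
    set (r := fun y => if Nat.eqb y x then N else 0).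
    specialize (H r). rewrite eval_atom in H.
    assert (Hrx : r x = N) by (unfold r; now rewrite Nat.eqb_refl).
    rewrite Hrx in H.
    destruct (ex_atom r B (k + N)) as [[[y|] m] [Hb Hb']]; [unfold N; lia|lia|..].
    + rewrite eval_atom in Hb'.
      destruct (Nat.eqb_spec y x) as [->|Hne].
      * apply absorb_in with (b := (Some x, m)); auto.
        apply atom_le; auto. rewrite Hrx in Hb'; lia.
      * assert (r y = 0) by (unfold r; apply Nat.eqb_neq in Hne; now rewrite Hne).
        pose proof (in_le r0 B _ Hb) as Hl. rewrite eval_atom in Hl.
        assert (r0 y = 0) by reflexivity. unfold N in Hb'. lia.
    + rewrite eval_atom in Hb'.
      pose proof (in_le r0 B _ Hb) as Hl. rewrite eval_atom in Hl.
      unfold N in Hb'. lia.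
  - destruct k as [|k].
    + unfold atom; simpl. rewrite L_comm, L_zero. reflexivity.
    + specialize (H r0). rewrite eval_atom in H.
      destruct (ex_atom r0 B (S k)) as [[ob m] [Hb Hb']]; [lia|lia|].
      rewrite eval_atom in Hb'.
      apply absorb_in with (b := (ob, m)); auto.
      apply atom_le; auto. destruct ob as [y|]; [assert (r0 y = 0) by reflexivity|]; lia.
Qed.

Lemma list_below A B : (forall r, eval r (J A) <= eval r (J B)) ->
  leq_equiv (LMax (J A) (J B)) (J B).
Proof.
  induction A as [|a A IH]; simpl; intros H.
  - rewrite L_comm, L_zero. reflexivity.
  - rewrite <- L_assoc, IH.
    + apply atom_below. intros r; specialize (H r); lia.
    + intros r; specialize (H r); lia.
Qed.

Lemma complete a b : (forall r, eval r a = eval r b) -> leq_equiv a b.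
Proof.
  intros H.
  assert (HA : forall r, eval r (J (atoms a)) = eval r a) by (intros r; symmetry; apply sound, nf).
  assert (HB : forall r, eval r (J (atoms b)) = eval r b) by (intros r; symmetry; apply sound, nf).
  rewrite (nf a), (nf b).
  pose proof (list_below (atoms a) (atoms b)) as H1.
  pose proof (list_below (atoms b) (atoms a)) as H2.
  rewrite <- H1, <- H2 at 1.
  - apply L_comm.
  - intros r; rewrite HA, HB, H; lia.
  - intros r; rewrite HA, HB, H; lia.
Qed.

Theorem mainTheorem7 : forall (l1 l2 l : level) (n : nat), 0 < n ->
  (leq_equiv (LMax l1 l) (LMax l2 (liter n l)) <->
   leq_equiv l1 (LMax l2 (liter n l))).
Proof.
  intros l1 l2 l n Hn; split; intros H; apply complete; intros r;
    pose proof (sound _ _ H r) as Hr; simpl in *; rewrite eval_liter in *; lia.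
Qed.
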